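(* Let $\alpha,\beta,\mu$ be real parameters with $0<\alpha\leq 1$, $\beta>0$, $0<\mu\leq 1$. Define $$T(x)=\frac{(1-\beta)x^2+(1-\alpha)x+\beta}{(\mu-\beta)x^2+x+\beta-\mu+1}.$$ Then $T$ is well defined on $[0,1]$ and maps $[0,1]$ into $[0,1]$. *)

(* Defs.v *)
From Stdlib Require Import Reals.
Open Scope R_scope.

Definition T_num (alpha beta : R) (x : R) : R :=
  (1 - beta) * x ^ 2 + (1 - alpha) * x + beta.
Definition T_den (beta mu : R) (x : R) : R :=
  (mu - beta) * x ^ 2 + x + beta - mu + 1.
Definition T (alpha beta mu : R) (x : R) : R :=
  T_num alpha beta x / T_den beta mu x.

(* Main.v *)
Require Import Defs.
From Stdlib Require Import Reals Lra Psatz.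
Open Scope R_scope.

Theorem proposition3 (alpha beta mu : R) :
  0 < alpha <= 1 -> 0 < beta -> 0 < mu <= 1 ->
  forall x : R, 0 <= x <= 1 ->
    T_den beta mu x <> 0 /\ 0 <= T alpha beta mu x <= 1.
Proof.
  intros Ha Hb Hm x Hx.
  assert (H1 : 0 <= 1 - x^2) by nra.
  assert (Hd : 0 < T_den beta mu x).
  { unfold T_den.
    assert (E : (mu - beta) * x ^ 2 + x + beta - mu + 1
              = beta * (1 - x^2) + x + x^2 + (1 - mu) * (1 - x^2)) by ring.
    rewrite E.
    assert (0 <= (1 - mu) * (1 - x^2)) by nra.
    destruct (Rle_lt_or_eq_dec 0 x (proj1 Hx)) as [Hp|Hz].
    - nra.
    - subst x. nra. }
  assert (Hn : 0 <= T_num alpha beta x).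
  { unfold T_num.
    assert (E : (1 - beta) * x ^ 2 + (1 - alpha) * x + beta
              = beta * (1 - x^2) + x^2 + (1 - alpha) * x) by ring.
    rewrite E. nra. }
  assert (Hdn : T_num alpha beta x <= T_den beta mu x).
  { unfold T_num, T_den.
    assert (0 <= (1 - mu) * (1 - x^2)) by nra.
    nra. }
  split; [lra|]. unfold T. split.
  - unfold Rdiv. apply Rmult_le_pos; [lra|]. left; apply Rinv_0_lt_compat; lra.
  - apply (Rmult_le_reg_r (T_den beta mu x)); [lra|].
    unfold Rdiv. rewrite Rmult_assoc, Rinv_l by lra. lra.
Qed.
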